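(* For every positive integer $N$ and every admissible index $\boldsymbol{k}=(k_1,\dots,k_r)$, \[ \zeta^{\diamondsuit\star}_N(\boldsymbol{k})=\sum_{A\subset[r]^1_{\boldsymbol{k}}}\ \sum_{(n_1,\dots,n_r)\in S^\star_{r,N}(A)}\Bigl(\prod_{i\in A}\frac1{N-n_i}\Bigr)\Bigl(\prod_{i\in[r]\setminus A}\frac1{n_i^{k_i}}\Bigr), \] where $S^\star_{r,N}(A)$ is the set of $(n_1,\dots,n_r)\in[N-1]^r$ such that for each $i\in[r-1]$: $n_i\le n_{i+1}$ if $i\in A$ or $i+1\notin A$, and $n_i<n_{i+1}$ if $i\notin A$ and $i+1\in A$.
   Context: $[n]=\{1,\dots,n\}$. An index is a tuple of positive integers; admissible = nonempty with last entry $\ge2$. For admissible $\boldsymbol{k}=(k_1,\dots,k_r)$: $[r]^1_{\boldsymbol{k}}=\{i:k_i=1\}$, $S_{r,N}(A)=\{(n_1,\dots,n_r)\in[N-1]^r: n_i\le n_{i+1}\ (i\in A),\ n_i<n_{i+1}\ (i\in[r-1]\setminus A)\}$, $\zeta^\diamondsuit_N(\boldsymbol{k})=\sum_{A\subset[r]^1_{\boldsymbol{k}}}\sum_{S_{r,N}(A)}\prod_{i\in A}(N-n_i)^{-1}\prod_{i\notin A}n_i^{-k_i}$. Write $\boldsymbol{l}\preceq\boldsymbol{k}$ if $\boldsymbol{l}$ is obtained by filling each $\square$ in $(k_1\,\square\cdots\square\,k_r)$ with a comma or a plus sign. $\zeta^{\diamondsuit\star}_N(\boldsymbol{k})=\sum_{\boldsymbol{l}\preceq\boldsymbol{k}}\zeta^\diamondsuit_N(\boldsymbol{l})$.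 *)

(* Defs.v *)
From mathcomp Require Import all_boot all_order all_algebra.
Set Implicit Arguments. Unset Strict Implicit. Unset Printing Implicit Defensive.
Import Order.TTheory GRing.Theory Num.Theory.
Local Open Scope ring_scope.

(* An index is a seq nat; positions are 0-based: entry i of the paper is
   nth 0 k (i-1). *)
Definition admissible (k : seq nat) : bool :=
  [&& k != [::], all (fun a => 0 < a)%N k & (1 < last 0%N k)%N].

Definition vals (r N : nat) (f : {ffun 'I_r -> 'I_N}) : seq nat :=
  [seq nat_of_ord (f i) | i <- enum 'I_r].

Definition inA (r : nat) (A : {set 'I_r}) (j : nat) : bool :=
  j \in [seq nat_of_ord i | i <- enum A].

(* membership in [N-1]^r : all values >= 1 (and < N by the type 'I_N) *)
Definition in_range (r N : nat) (f : {ffun 'I_r -> 'I_N}) : bool :=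
  [forall i : 'I_r, (0 < f i)%N].

Definition S_set (r N : nat) (A : {set 'I_r}) (f : {ffun 'I_r -> 'I_N}) : bool :=
  in_range f &&
  [forall i : 'I_r, (i.+1 < r)%N ==>
     (let s := vals f in
      if inA A i then (nth 0 s i <= nth 0 s i.+1)%N
      else (nth 0 s i < nth 0 s i.+1)%N)].

Definition Sstar_set (r N : nat) (A : {set 'I_r}) (f : {ffun 'I_r -> 'I_N}) : bool :=
  in_range f &&
  [forall i : 'I_r, (i.+1 < r)%N ==>
     (let s := vals f in
      if inA A i || ~~ inA A i.+1 then (nth 0 s i <= nth 0 s i.+1)%N
      else (nth 0 s i < nth 0 s i.+1)%N)].

Definition in_ones (k : seq nat) (A : {set 'I_(size k)}) : bool :=
  [forall i in A, nth 0%N k i == 1%N].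

Definition summand (k : seq nat) (N : nat) (A : {set 'I_(size k)})
  (f : {ffun 'I_(size k) -> 'I_N}) : rat :=
  (\prod_(i in A) ((N - f i)%:R)^-1) *
  (\prod_(i in ~: A) (((f i)%:R) ^+ (nth 0%N k i))^-1).

Definition zeta_diamond (N : nat) (k : seq nat) : rat :=
  \sum_(A : {set 'I_(size k)} | in_ones A)
    \sum_(f : {ffun 'I_(size k) -> 'I_N} | S_set A f) summand A f.

(* All indices l obtained from k by filling each box with a comma or a plus
   (one entry per filling; distinct fillings give distinct indices). *)
Fixpoint coarsenings (k : seq nat) : seq (seq nat) :=
  match k with
  | [::] => [:: [::]]
  | a :: t =>
      match t with
      | [::] => [:: [:: a]]
      | _ => flatten [seq [:: a :: l; (a + head 0 l)%N :: behead l]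
                     | l <- coarsenings t]
      end
  end.

Definition zeta_diamond_star (N : nat) (k : seq nat) : rat :=
  \sum_(l <- coarsenings k) zeta_diamond N l.

Example coarsen_ex : coarsenings [:: 1; 2; 3]%N =
  [:: [:: 1; 2; 3]; [:: 3; 3]; [:: 1; 5]; [:: 6]]%N.
Proof. by []. Qed.

(* Main.v *)
Require Import Defs.
From mathcomp Require Import all_boot all_order all_algebra ring.
Set Implicit Arguments. Unset Strict Implicit. Unset Printing Implicit Defensive.
Import Order.TTheory GRing.Theory Num.Theory.
Local Open Scope ring_scope.

Definition ind (b : bool) : rat := if b then 1 else 0.
Definition relb (b : bool) (p v : nat) : bool := if b then (p <= v)%N else (p < v)%N.

Fixpoint Xs (N : nat) (l : seq nat) (p : nat) (b1 b2 : bool) : rat :=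
  match l with
  | [::] => 1
  | h :: rest => \sum_(0 <= v < N) (ind (0 < v)%N *
       (ind (relb b1 p v) * ((v%:R ^+ h)^-1 * Xs N rest v false false)
        + ind (h == 1)%N * ind (relb b2 p v) * ((N - v)%:R^-1 * Xs N rest v true true)))
  end.

Fixpoint Ys (N : nat) (l : seq nat) (p : nat) (b1 b2 : bool) : rat :=
  match l with
  | [::] => 1
  | h :: rest => \sum_(0 <= v < N) (ind (0 < v)%N *
       (ind (relb b1 p v) * ((v%:R ^+ h)^-1 * Ys N rest v true false)
        + ind (h == 1)%N * ind (relb b2 p v) * ((N - v)%:R^-1 * Ys N rest v true true)))
  end.

Lemma Xs_cons N h rest p b1 b2 : Xs N (h :: rest) p b1 b2 =
  \sum_(0 <= v < N) (ind (0 < v)%N *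
       (ind (relb b1 p v) * ((v%:R ^+ h)^-1 * Xs N rest v false false)
        + ind (h == 1)%N * ind (relb b2 p v) * ((N - v)%:R^-1 * Xs N rest v true true))).
Proof. by []. Qed.
Lemma Ys_cons N h rest p b1 b2 : Ys N (h :: rest) p b1 b2 =
  \sum_(0 <= v < N) (ind (0 < v)%N *
       (ind (relb b1 p v) * ((v%:R ^+ h)^-1 * Ys N rest v true false)
        + ind (h == 1)%N * ind (relb b2 p v) * ((N - v)%:R^-1 * Ys N rest v true true))).
Proof. by []. Qed.
Lemma Xs_nil N p b1 b2 : Xs N [::] p b1 b2 = 1. Proof. by []. Qed.
Lemma Ys_nil N p b1 b2 : Ys N [::] p b1 b2 = 1. Proof. by []. Qed.
Arguments Xs : simpl never.
Arguments Ys : simpl never.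

Lemma Xs_key N h rest v : (v < N)%N ->
  Xs N (h :: rest) v true false = Xs N (h :: rest) v false false
    + ind (0 < v)%N * ((v%:R ^+ h)^-1 * Xs N rest v false false).
Proof.
move=> vN; rewrite !Xs_cons.
have -> : ind (0 < v)%N * ((v%:R ^+ h)^-1 * Xs N rest v false false) =
   \sum_(0 <= w < N | w == v) (ind (0 < w)%N * ((w%:R ^+ h)^-1 * Xs N rest w false false)).
  by rewrite big_nat1_eq leq0n vN.
rewrite [X in _ + X]big_mkcond /= -big_split /=; apply: eq_big_nat => w _.
rewrite /relb /=.
by case: (ltngtP v w) => *; rewrite /ind /=; case: (0 < w)%N; case: (h == 1)%N; ring.
Qed.

Lemma coars_pos k : all (fun a => 0 < a)%N k ->
  forall l, l \in coarsenings k -> all (fun a => 0 < a)%N l && ((size k > 0)%N ==> (size l > 0)%N).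
Proof.
elim: k => [|a t IH] /=.
  by move=> _ l; rewrite inE => /eqP ->.
case/andP=> a0 tp l.
case: t IH tp => [|c t'] IH tp.
  by rewrite inE => /eqP -> /=; rewrite a0.
move/flattenP=> [s /mapP [l' l'in ->]].
have /andP [l'p l'n] := IH tp l' l'in.
case: l' l'in l'p l'n => [|h r] //= _ /andP [h0 rp] _.
by rewrite !inE => /orP [] /eqP -> /=; rewrite ?a0 ?h0 ?rp ?addn_gt0 ?a0.
Qed.

Lemma main_comb N k : all (fun a => 0 < a)%N k -> forall p b1 b2,
  \sum_(l <- coarsenings k) Xs N l p b1 b2 = Ys N k p b1 b2.
Proof.
elim: k => [|a t IH] /=.
  by move=> _ p b1 b2; rewrite big_seq1 Xs_nil Ys_nil.
case/andP=> a0 tp p b1 b2.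
case: t IH tp => [|c t'] IH tp.
  by rewrite big_seq1 Xs_cons Ys_cons; apply: eq_big_nat => v _; rewrite Xs_nil Ys_nil.
rewrite big_flatten /= big_map.
have E : forall l, l \in coarsenings (c :: t') ->
  \big[+%R/0]_(i <- [:: a :: l; (a + head 0%N l)%N :: behead l]) Xs N i p b1 b2 =
  \sum_(0 <= v < N) (ind (0 < v)%N *
       (ind (relb b1 p v) * ((v%:R ^+ a)^-1 * Xs N l v true false)
        + ind (a == 1)%N * ind (relb b2 p v) * ((N - v)%:R^-1 * Xs N l v true true))).
  move=> l lin.
  have /andP [lp ln] := coars_pos tp lin.
  case: l lin lp ln => [|h r] //= _ /andP [h0 rp] _.
  rewrite big_cons big_seq1.
  rewrite (Xs_cons N a (h :: r)) (Xs_cons N (a + h) r) -big_split; apply: eq_big_nat => v /andP [_ vN].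
  rewrite Xs_key //.
  have -> : (a + h == 1)%N = false by case: a a0 {IH} => // a' _; case: h h0 => // h' _; rewrite addSn addnS.
  rewrite /ind; case: (0 < v)%N; case: (relb b1 p v); case: (relb b2 p v); case: (a == 1)%N;
    rewrite ?exprD ?invfM /=; ring.
rewrite (eq_big_seq _ E) exchange_big Ys_cons; apply: eq_big_nat => v _.
rewrite -!IH // -big_distrr; congr (_ * _); rewrite big_split; congr (_ + _);
  by rewrite -!big_distrr.
Qed.

Lemma indA a b : ind (a && b) = ind a * ind b.
Proof. by case: a; case: b; rewrite /ind ?mul1r ?mul0r. Qed.
Lemma ind1 : ind true = 1. Proof. by []. Qed.

Definition condD (x y : bool * nat) : bool := relb x.1 x.2 y.2.
Definition condS (x y : bool * nat) : bool :=
  if x.1 || ~~ y.1 then (x.2 <= y.2)%N else (x.2 < y.2)%N.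
Definition onesok (l : seq nat) (t : seq (bool * nat)) : bool :=
  all (fun q => q.1.1 ==> (q.2 == 1)%N) (zip t l).
Definition wf N (q : (bool * nat) * nat) : rat :=
  if q.1.1 then (N - q.1.2)%:R^-1 else (q.1.2%:R ^+ q.2)^-1.
Definition wt N (l : seq nat) (t : seq (bool * nat)) : rat := \prod_(q <- zip t l) wf N q.
Definition allpos (t : seq (bool * nat)) := all (fun x => 0 < x.2)%N t.
Definition pairsN N := [seq (b, v) | b <- [:: false; true], v <- index_iota 0 N].
Fixpoint aseqs N r : seq (seq (bool * nat)) :=
  match r with
  | 0 => [:: [::]]
  | r'.+1 => [seq x :: s | x <- pairsN N, s <- aseqs N r']
  end.

Lemma sum_aseqsS N r (F : seq (bool * nat) -> rat) :
  \sum_(t <- aseqs N r.+1) F t =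
  \sum_(0 <= v < N) \sum_(t <- aseqs N r) F ((false, v) :: t) +
  \sum_(0 <= v < N) \sum_(t <- aseqs N r) F ((true, v) :: t).
Proof. by rewrite /= big_allpairs_dep /pairsN big_allpairs big_cons big_seq1. Qed.

Lemma L3D N l : forall p b,
  \sum_(t <- aseqs N (size l)) ind (onesok l t && allpos t && path condD (b, p) t) * wt N l t
  = Xs N l p b b.
Proof.
elim: l => [|h l IH] p b.
  by rewrite /= big_seq1 Xs_nil /wt /= big_nil mulr1.
rewrite sum_aseqsS Xs_cons -big_split.
apply: eq_bigr => v _.
rewrite -(IH v false) -(IH v true).
rewrite (eq_bigr (fun t => (ind (0 < v)%N * ind (relb b p v) * (v%:R ^+ h)^-1) *
   (ind (onesok l t && allpos t && path condD (false, v) t) * wt N l t))); last first.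
  by move=> t _; rewrite /onesok /allpos /wt /= big_cons /wf /= !indA ?ind1; ring.
rewrite [X in _ + X = _](eq_bigr (fun t => (ind (0 < v)%N * ind (h == 1)%N * ind (relb b p v) * (N - v)%:R^-1) *
   (ind (onesok l t && allpos t && path condD (true, v) t) * wt N l t))); last first.
  by move=> t _; rewrite /onesok /allpos /wt /= big_cons /wf /= !indA; ring.
rewrite -!big_distrr /=; ring.
Qed.

Lemma L3S N k : forall p pa,
  \sum_(t <- aseqs N (size k)) ind (onesok k t && allpos t && path condS (pa, p) t) * wt N k t
  = Ys N k p true pa.
Proof.
elim: k => [|h l IH] p pa.
  by rewrite /= big_seq1 Ys_nil /wt /= big_nil mulr1.
rewrite sum_aseqsS Ys_cons -big_split.
apply: eq_bigr => v _.
rewrite -(IH v false) -(IH v true).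
rewrite (eq_bigr (fun t => (ind (0 < v)%N * ind (relb true p v) * (v%:R ^+ h)^-1) *
   (ind (onesok l t && allpos t && path condS (false, v) t) * wt N l t))); last first.
  by move=> t _; rewrite /onesok /allpos /wt /= big_cons /wf /condS /= orbT !indA ?ind1; ring.
rewrite [X in _ + X = _](eq_bigr (fun t => (ind (0 < v)%N * ind (h == 1)%N * ind (relb pa p v) * (N - v)%:R^-1) *
   (ind (onesok l t && allpos t && path condS (true, v) t) * wt N l t))); last first.
  by move=> t _; rewrite /onesok /allpos /wt /= big_cons /wf /condS /= orbF !indA; ring.
rewrite -!big_distrr /=; ring.
Qed.

Definition sq r N (A : {set 'I_r}) (f : {ffun 'I_r -> 'I_N}) : seq (bool * nat) :=
  [seq (i \in A, nat_of_ord (f i)) | i <- enum 'I_r].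

Lemma size_sq r N A f : size (@sq r N A f) = r.
Proof. by rewrite size_map size_enum_ord. Qed.

Lemma nth_sqo r N A f (o : 'I_r) : nth (false, 0%N) (@sq r N A f) o = (o \in A, nat_of_ord (f o)).
Proof. by rewrite (nth_map o) ?size_enum_ord ?ltn_ord // nth_ord_enum. Qed.

Lemma nth_sq r N A f i : (i < r)%N ->
  nth (false, 0%N) (@sq r N A f) i = (inA A i, nth 0%N (vals f) i).
Proof.
move=> ir.
have -> : i = nat_of_ord (Ordinal ir) by [].
rewrite nth_sqo /inA /vals (mem_map val_inj) mem_enum.
by rewrite (nth_map (Ordinal ir)) ?size_enum_ord ?ltn_ord // nth_ord_enum.
Qed.

Lemma mem_aseqs N r t : (t \in aseqs N r) = (size t == r) && all (fun x => x.2 < N)%N t.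
Proof.
elim: r t => [|r IH] [|x t] //=.
- apply/negbTE/allpairsP => -[[y s]] [] //.
- apply/allpairsP/andP.
    move=> [[y s] [/= yin sin [-> ->]]].
    move: sin; rewrite IH => /andP [/eqP -> ->]; rewrite andbT; split => //.
    by move: yin => /allpairsP [[b v] [/= _ vin ->]]; move: vin; rewrite mem_index_iota.
  move=> [st /andP [xN hat]]; exists (x, t); split => //; last by rewrite IH -eqSS st hat.
  by case: x xN => b v /= vN; apply: allpairs_f; rewrite ?mem_index_iota ?inE //; case: b.
Qed.

Lemma uniq_aseqs N r : uniq (aseqs N r).
Proof.
elim: r => [|r IH] //=.
apply: allpairs_uniq => //.
  apply: allpairs_uniq => //; first exact: iota_uniq.
  by move=> [b v] [b' v'] _ _ /= [-> ->].
by move=> [x s] [y u] _ _ /= [-> ->].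
Qed.

Lemma sq_inj r N : injective (fun p : {set 'I_r} * {ffun 'I_r -> 'I_N} => sq p.1 p.2).
Proof.
move=> [A f] [B g] /= E.
have H : forall o : 'I_r, (o \in A, nat_of_ord (f o)) = (o \in B, nat_of_ord (g o)).
  by move=> o; rewrite -!nth_sqo E.
congr (_, _).
  by apply/setP => o; have [] := H o.
by apply/ffunP => o; apply: val_inj; have [] := H o.
Qed.

Lemma L1 r N (G : seq (bool * nat) -> rat) :
  \sum_(A : {set 'I_r}) \sum_(f : {ffun 'I_r -> 'I_N}) G (sq A f) = \sum_(t <- aseqs N r) G t.
Proof.
rewrite pair_bigA /=.
rewrite -(big_map (fun p : {set 'I_r} * {ffun 'I_r -> 'I_N} => sq p.1 p.2) xpredT G).
apply: perm_big; apply: uniq_perm.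
- by rewrite (map_inj_uniq (@sq_inj r N)) index_enum_uniq.
- exact: uniq_aseqs.
move=> t; rewrite mem_aseqs; apply/mapP/andP.
  move=> [[A f] _ ->]; rewrite size_sq; split => //.
  by rewrite all_map; apply/allP => i _ /=.
move=> [/eqP Hs Ha].
have H : forall i : 'I_r, ((nth (false, 0%N) t i).2 < N)%N.
  by move=> i; apply: (all_nthP (false, 0%N) Ha); rewrite Hs.
exists ([set i : 'I_r | (nth (false, 0%N) t i).1], [ffun i => Ordinal (H i)]).
  by rewrite mem_index_enum.
apply: (@eq_from_nth _ (false, 0%N)); first by rewrite size_sq.
move=> i; rewrite Hs => ir.
have -> : i = nat_of_ord (Ordinal ir) by [].
by rewrite nth_sqo /= inE ffunE /=; case: nth.
Qed.


Lemma ones_eq (l : seq nat) N (A : {set 'I_(size l)}) (f : {ffun 'I_(size l) -> 'I_N}) :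
  in_ones A = onesok l (sq A f).
Proof.
have sz : size (zip (sq A f) l) = size l by rewrite size_zip size_sq minnn.
apply/forall_inP/(all_nthP ((false, 0%N), 0%N)); rewrite sz.
  move=> H i il; rewrite nth_zip ?size_sq //.
  have -> : i = nat_of_ord (Ordinal il) by [].
  by rewrite nth_sqo /=; apply/implyP => /H.
move=> H o oA; have := H o (ltn_ord o).
by rewrite nth_zip ?size_sq // nth_sqo /= oA.
Qed.

Lemma range_eq r N (A : {set 'I_r}) (f : {ffun 'I_r -> 'I_N}) :
  in_range f = allpos (sq A f).
Proof.
apply/forallP/(all_nthP (false, 0%N)); rewrite size_sq.
  move=> H i ir; have -> : i = nat_of_ord (Ordinal ir) by [].
  by rewrite nth_sqo /=.
by move=> H o; have := H o (ltn_ord o); rewrite nth_sqo.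
Qed.

Lemma consD_eq r N (A : {set 'I_r}) (f : {ffun 'I_r -> 'I_N}) :
  [forall i : 'I_r, (i.+1 < r)%N ==>
     (let s := vals f in
      if inA A i then (nth 0 s i <= nth 0 s i.+1)%N
      else (nth 0 s i < nth 0 s i.+1)%N)] = sorted condD (sq A f).
Proof.
apply/forallP/(sortedP (false, 0%N)); rewrite size_sq.
  move=> H i ir; have ir' := ltnW ir.
  have := H (Ordinal ir'); rewrite /= ir /= (nth_sq _ _ ir') (nth_sq _ _ ir).
  by rewrite /condD /relb /=.
move=> H o; apply/implyP => ir; have := H o ir.
by rewrite (nth_sq _ _ (ltn_ord o)) (nth_sq _ _ ir) /condD /relb /=.
Qed.

Lemma consS_eq r N (A : {set 'I_r}) (f : {ffun 'I_r -> 'I_N}) :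
  [forall i : 'I_r, (i.+1 < r)%N ==>
     (let s := vals f in
      if inA A i || ~~ inA A i.+1 then (nth 0 s i <= nth 0 s i.+1)%N
      else (nth 0 s i < nth 0 s i.+1)%N)] = sorted condS (sq A f).
Proof.
apply/forallP/(sortedP (false, 0%N)); rewrite size_sq.
  move=> H i ir; have ir' := ltnW ir.
  have := H (Ordinal ir'); rewrite /= ir /= (nth_sq _ _ ir') (nth_sq _ _ ir).
  by rewrite /condS /=.
move=> H o; apply/implyP => ir; have := H o ir.
by rewrite (nth_sq _ _ (ltn_ord o)) (nth_sq _ _ ir) /condS /=.
Qed.

Lemma pathD_eq t : allpos t && sorted condD t = allpos t && path condD (true, 1%N) t.
Proof. by case: t => //= x t; rewrite /allpos /condD /relb /=; case: (0 < x.2)%N. Qed.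
Lemma pathS_eq t : allpos t && sorted condS t = allpos t && path condS (true, 1%N) t.
Proof. by case: t => //= x t; rewrite /allpos /condS /=; case: (0 < x.2)%N. Qed.

Lemma summand_eq (l : seq nat) N (A : {set 'I_(size l)}) (f : {ffun 'I_(size l) -> 'I_N}) :
  summand A f = wt N l (sq A f).
Proof.
rewrite /summand /wt (big_nth ((false, 0%N), 0%N)) size_zip size_sq minnn big_mkord.
rewrite [RHS](bigID (mem A)) /=; congr (_ * _).
  apply: eq_big => [i|i iA]; first by [].
  by rewrite nth_zip ?size_sq // nth_sqo /wf /= iA.
apply: eq_big => [i|i iA]; first by rewrite inE.
by rewrite nth_zip ?size_sq // nth_sqo /wf /=; move: iA; rewrite inE => /negbTE ->.
Qed.

Lemma sum_ind (I J : finType) (P : pred I) (Q : I -> pred J) (F : I -> J -> rat) :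
  \sum_(i | P i) \sum_(j | Q i j) F i j = \sum_i \sum_j ind (P i && Q i j) * F i j.
Proof.
rewrite big_mkcond; apply: eq_bigr => i _; case: (P i) => /=.
  by rewrite big_mkcond; apply: eq_bigr => j _; case: (Q i j); rewrite /ind ?mul1r ?mul0r.
by rewrite big1 // => j _; rewrite /ind mul0r.
Qed.

Lemma zetaD_eq N l : zeta_diamond N l = Xs N l 1%N true true.
Proof.
rewrite /zeta_diamond sum_ind -(L3D N l 1%N true).
rewrite -(@L1 _ N (fun t => ind (onesok l t && allpos t && path condD (true, 1%N) t) * wt N l t)).
apply: eq_bigr => A _; apply: eq_bigr => f _.
by rewrite summand_eq /S_set (range_eq A) consD_eq pathD_eq (ones_eq _ f) andbA.
Qed.

Lemma zetaS_eq N k :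
  \sum_(A : {set 'I_(size k)} | in_ones A)
    \sum_(f : {ffun 'I_(size k) -> 'I_N} | Sstar_set A f) summand A f = Ys N k 1%N true true.
Proof.
rewrite sum_ind -(L3S N k 1%N true).
rewrite -(@L1 _ N (fun t => ind (onesok k t && allpos t && path condS (true, 1%N) t) * wt N k t)).
apply: eq_bigr => A _; apply: eq_bigr => f _.
by rewrite summand_eq /Sstar_set (range_eq A) consS_eq pathS_eq (ones_eq _ f) andbA.
Qed.

Theorem mainTheorem11 (N : nat) (k : seq nat) :
  (0 < N)%N -> admissible k ->
  zeta_diamond_star N k =
  \sum_(A : {set 'I_(size k)} | in_ones A)
    \sum_(f : {ffun 'I_(size k) -> 'I_N} | Sstar_set A f) summand A f.
Proof.
move=> _ /and3P [_ kp _].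
rewrite zetaS_eq /zeta_diamond_star -main_comb //.
by apply: eq_bigr => l _; rewrite zetaD_eq.
Qed.
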